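(* Let $n\ge 1$ and let $L\subseteq\Sigma^*$ be a finite or cofinite regular language with state complexity $n$. Then the syntactic complexity of $L$ satisfies $\sigma(L)\le (n-1)!$. Moreover, this bound is tight: for every $n\ge 1$ there exist an alphabet $\Sigma$ and a finite language $L\subseteq\Sigma^*$ with state complexity $n$ and $\sigma(L)=(n-1)!$.
   Context: A language $L\subseteq\Sigma^*$ over a finite non-empty alphabet $\Sigma$ is cofinite if its complement $\Sigma^*\setminus L$ is finite. The state complexity of a regular language $L$ is the number of states of its minimal deterministic finite automaton (DFA). The syntactic (Myhill) congruence of $L$ is defined on $\Sigma^*$ by $x\approx_L y$ iff for all $u,v\in\Sigma^*$, $uxv\in L \Leftrightarrow uyv\in L$. The syntactic semigroup of $L$ is $\Sigma^+/\approx_L$. The syntactic complexity $\sigma(L)$ is the cardinality of the syntactic semigroup of $L$; equivalently, it is the number of distinct transformations of the state set of the minimal DFA of $L$ induced by non-empty words. *)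

(* Defs.v *)
From mathcomp Require Import all_boot.
Set Implicit Arguments. Unset Strict Implicit. Unset Printing Implicit Defensive.

Definition lang (Sigma : finType) := pred (seq Sigma).

Definition finite_lang (Sigma : finType) (L : lang Sigma) : Prop :=
  exists s : seq (seq Sigma), forall w, L w -> w \in s.

Definition cofinite_lang (Sigma : finType) (L : lang Sigma) : Prop :=
  exists s : seq (seq Sigma), forall w, ~~ L w -> w \in s.

Record DFA (Sigma : finType) := {
  dfa_state : finType;
  dfa_init : dfa_state;
  dfa_trans : dfa_state -> Sigma -> dfa_state;
  dfa_final : pred dfa_state }.

Definition dfa_accepts (Sigma : finType) (A : DFA Sigma) (w : seq Sigma) : bool :=
  @dfa_final Sigma A (foldl (@dfa_trans Sigma A) (@dfa_init Sigma A) w).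

Definition state_complexity (Sigma : finType) (L : lang Sigma) (n : nat) : Prop :=
  (exists A : DFA Sigma, dfa_accepts A =1 L /\ #|@dfa_state Sigma A| = n) /\
  (forall A : DFA Sigma, dfa_accepts A =1 L -> n <= #|@dfa_state Sigma A|).

Definition syn_equiv (Sigma : finType) (L : lang Sigma) (x y : seq Sigma) : Prop :=
  forall u v : seq Sigma, L (u ++ x ++ v) = L (u ++ y ++ v).

(* [syntactic_complexity L k]: the syntactic semigroup Sigma^+ / ~L has exactly
   k elements, i.e. there are k non-empty words, pairwise non-congruent, such
   that every non-empty word is congruent to one of them. *)
Definition syntactic_complexity (Sigma : finType) (L : lang Sigma) (k : nat) : Prop :=
  exists reps : seq (seq Sigma),
    [/\ size reps = k,
        forall x, x \in reps -> x != [::],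
        forall i j, i < k -> j < k -> syn_equiv L (nth [::] reps i) (nth [::] reps j) -> i = j
      & forall w, w != [::] -> exists2 x, x \in reps & syn_equiv L w x].

(* Main.v *)
Require Import Defs.
From mathcomp Require Import all_boot.
From Stdlib Require Import ClassicalEpsilon.
Set Implicit Arguments. Unset Strict Implicit. Unset Printing Implicit Defensive.

Definition pb (P : Prop) : bool := if excluded_middle_informative P then true else false.
Lemma pbP (P : Prop) : reflect P (pb P).
Proof. by rewrite /pb; case: excluded_middle_informative => h; constructor. Qed.

Lemma size_in_sum (T : eqType) (s : seq (seq T)) w :
  w \in s -> size w <= \sum_(v <- s) size v.
Proof.
elim: s => // v s IH; rewrite in_cons big_cons => /orP[/eqP->|/IH h].
  exact: leq_addr.
exact: leq_trans h (leq_addl _ _).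
Qed.

Lemma prod_cnt (Q : finType) (ht : Q -> nat) (m : nat) (X : {set Q}) :
  #|X| = m ->
  \prod_(q in X) #|[set r in X | ht r < ht q]|.+1 <= m`!.
Proof.
elim: m X => [|m IH] X hX.
  by move/eqP: hX; rewrite cards_eq0 => /eqP ->; rewrite big_set0.
have [q0 Xq0] : exists q0, q0 \in X.
  by apply/set0Pn; rewrite -card_gt0 hX.
case: (@arg_maxnP _ q0 (mem X) ht Xq0) => q1 Xq1 maxq1.
have hX' : #|X :\ q1| = m.
  have Xq1b : q1 \in X by []. 
  by move: (cardsD1 q1 X); rewrite Xq1b hX add1n => -[].
rewrite (bigD1 q1 Xq1) /= factS leq_mul //.
  rewrite ltnS -hX'; apply: subset_leq_card; apply/subsetP => r.
  rewrite !inE => /andP[rX hr]; rewrite rX andbT; apply/eqP => e.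
  by rewrite e ltnn in hr.
apply: leq_trans (IH _ hX').
rewrite [X in _ <= X](eq_bigl (fun q => (q \in X) && (q != q1))); last first.
  by move=> q; rewrite !inE andbC.
apply: leq_prod => q /andP[qX _].
rewrite ltnS; apply: subset_leq_card; apply/subsetP => r.
rewrite !inE => /andP[rX hr]; rewrite rX andbT hr andbT.
apply/eqP => e; move: (maxq1 q qX); rewrite -e => h.
by move: (leq_ltn_trans h hr); rewrite ltnn.
Qed.

Lemma prod_foldr (T : finType) (E : T -> nat) :
  foldr muln 1 [seq E x | x : T] = \prod_(x : T) E x.
Proof. rewrite -(big_enum _ _ [pred x : T | true]) /=.
rewrite -(big_map E xpredT id) .
rewrite unlock. done. Qed.

Lemma card_family_prod (T rT : finType) (F : T -> {set rT}) :
  #|family F| = \prod_(x : T) #|F x|.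
Proof. by rewrite card_family prod_foldr. Qed.

Section Upper.
Variables (Sigma : finType) (A : DFA Sigma) (s : seq (seq Sigma)) (L : lang Sigma).
Hypothesis acc : dfa_accepts A =1 L.
Hypothesis fin : forall w, L w -> w \in s.
Variable a : Sigma.

Local Notation Q := (dfa_state A).
Definition run (q : Q) w := foldl (@dfa_trans Sigma A) q w.
Definition lng (q : Q) w := dfa_final (run q w).
Definition reachb (q : Q) := pb (exists u, run (dfa_init A) u = q).
Definition K := (\sum_(v <- s) size v).+1.

Lemma run_cat q x y : run q (x ++ y) = run (run q x) y.
Proof. by rewrite /run foldl_cat. Qed.

Lemma reach_run q x : reachb q -> reachb (run q x).
Proof.
move/pbP=> [u hu]; apply/pbP; exists (u ++ x); by rewrite run_cat hu.
Qed.

Lemma reach_init : reachb (dfa_init A).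
Proof. by apply/pbP; exists [::]. Qed.

Lemma reach_bound q w : reachb q -> lng q w -> size w < K.
Proof.
move/pbP=> [u hu] hw.
have : L (u ++ w) by rewrite -acc /dfa_accepts -/(run _ _) run_cat hu.
move/fin/size_in_sum; rewrite size_cat /K ltnS => h.
exact: leq_trans (leq_addl _ _) h.
Qed.

Definition sameL (q r : Q) := pb (forall w, lng q w = lng r w).

Definition canon (q : Q) := odflt q [pick r | reachb r && sameL q r].

Lemma canon_spec q : reachb q -> reachb (canon q) /\ (forall w, lng q w = lng (canon q) w).
Proof.
move=> rq; rewrite /canon; case: pickP => [r /andP[rr /pbP h]|] /=; first by split.
by move/(_ q); rewrite rq /=; move/negP; case; apply/pbP.
Qed.

Lemma canon_eq q r : reachb q -> (forall w, lng q w = lng r w) -> canon q = canon r.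
Proof.
move=> rq e; rewrite /canon (eq_pick (Q := fun x => reachb x && sameL r x)).
  case: pickP => //= /(_ q); rewrite rq /=; move/negP; case; apply/pbP => w.
  by rewrite e.
move=> x /=; congr andb; apply/pbP/pbP => h w; by rewrite -h e.
Qed.

Lemma canon_idem q : reachb q -> canon (canon q) = canon q.
Proof.
move=> rq; have [rc e] := canon_spec rq.
by symmetry; apply: canon_eq.
Qed.

Definition lenb (q : Q) i := [exists t : i.-tuple Sigma, lng q t].
Definition ht (q : Q) := \max_(i < K | lenb q i) i.+1.

Lemma ht_eq q r : (forall w, lng q w = lng r w) -> ht q = ht r.
Proof.
move=> e; apply: eq_bigl => i; apply: eq_existsb => t; exact: e.
Qed.

Lemma ht_lt q x : reachb q -> x != [::] -> 0 < ht (run q x) -> ht (run q x) < ht q.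
Proof.
move=> rq xn hp.
have [i1 Pi1] : exists i : 'I_K, lenb (run q x) i.
  apply/existsP; apply: contraTT hp; rewrite negb_exists => /forallP hn.
  rewrite lt0n negbK -leqn0; apply/bigmax_leqP => i; by rewrite (negbTE (hn i)).
have hc : 0 < #|(fun i : 'I_K => lenb (run q x) i)| by apply/card_gt0P; exists i1.
have [i0 Pi0 E] := @eq_bigmax_cond _ (fun i : 'I_K => lenb (run q x) i) (fun i => i.+1) hc.
have -> : ht (run q x) = i0.+1 by exact: E.
case/existsP: Pi0 => t ht0.
have hl : lng q (x ++ t) by rewrite /lng run_cat.
have hb := reach_bound rq hl.
have hlen : lenb q (Ordinal hb).
  by apply/existsP; exists (in_tuple (x ++ t)).
have := @leq_bigmax_cond _ (fun i : 'I_K => lenb q i) (fun i : 'I_K => i.+1) _ hlen; rewrite -/(ht q) /=; apply: leq_trans.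
by rewrite size_cat size_tuple ltnS -{1}(add0n i0) ltn_add2r lt0n size_eq0.
Qed.

Lemma ht0_dead q w : reachb q -> ht q = 0 -> lng q w = false.
Proof.
move=> rq h; apply/negP => hw.
have hb := reach_bound rq hw.
have hlen : lenb q (Ordinal hb) by apply/existsP; exists (in_tuple w).
by move: (@leq_bigmax_cond _ (fun i : 'I_K => lenb q i) (fun i : 'I_K => i.+1) _ hlen); rewrite -/(ht q) h.
Qed.

Lemma dead_ht0 q : (forall w, lng q w = false) -> ht q = 0.
Proof.
move=> h; apply/eqP; rewrite -leqn0; apply/bigmax_leqP => i /existsP[t].
by rewrite h.
Qed.

Definition dstate := run (dfa_init A) (nseq K a).
Lemma dstate_reach : reachb dstate.
Proof. exact: reach_run reach_init. Qed.
Lemma dstate_dead : ht dstate = 0.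
Proof.
apply: dead_ht0 => w; apply/negP => hw.
have : lng (dfa_init A) (nseq K a ++ w) by rewrite /lng run_cat.
move/(reach_bound reach_init); rewrite size_cat size_nseq.
by rewrite ltnNge leq_addr.
Qed.


Lemma accE w : L w = lng (dfa_init A) w.
Proof. by rewrite -acc. Qed.

Definition cr q := reachb q && (canon q == q).
Definition fx (x : seq Sigma) : {ffun Q -> Q} :=
  [ffun q => if cr q then canon (run q x) else q].

Lemma cr_canon q : reachb q -> cr (canon q).
Proof.
move=> rq; have [rc _] := canon_spec rq.
by rewrite /cr rc (canon_idem rq) eqxx.
Qed.

Lemma fx_syn x y : fx x = fx y -> syn_equiv L x y.
Proof.
move=> e u v; rewrite !accE.
have key : forall z, lng (dfa_init A) (u ++ z ++ v) = lng (fx z (canon (run (dfa_init A) u))) v.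
  move=> z; set q := run (dfa_init A) u.
  have rq : reachb q by apply: reach_run reach_init.
  have [rc ec] := canon_spec rq.
  rewrite ffunE cr_canon //.
  have rcz := reach_run z rc.
  have [_ ez] := canon_spec rcz.
  by rewrite /lng run_cat -/q -/(lng _ _) ec /lng run_cat -/(lng _ _) ez.
by rewrite !key e.
Qed.

Lemma syn_fx x y : syn_equiv L x y -> fx x = fx y.
Proof.
move=> e; apply/ffunP => q; rewrite !ffunE.
case crq: (cr q) => //; case/andP: crq => rq _.
apply: canon_eq; first exact: reach_run.
move=> w; case/pbP: rq => u hu.
by rewrite /lng -!run_cat -hu -!run_cat -/(lng _ _) -/(lng _ _) -!accE.
Qed.

Definition Dd := [set r | cr r && (ht r == 0)].
Definition Lv := [set r | cr r && (ht r != 0)].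
Definition F (q : Q) : {set Q} :=
  if ~~ cr q then [set q] else if ht q == 0 then Dd
  else [set r | cr r && ((ht r == 0) || (ht r < ht q))].

Lemma fx_family x : x != [::] -> fx x \in family F.
Proof.
move=> xn; apply/familyP => q; rewrite ffunE /F.
case crq: (cr q); last by rewrite /= set11.
have rq : reachb q by case/andP: crq.
have rr := reach_run x rq.
have [rc ec] := canon_spec rr.
case: eqP => h0; rewrite /Dd inE cr_canon //= -(ht_eq ec).
  case: (posnP (ht (run q x))) => // hp.
  by move: (ht_lt rq xn hp); rewrite h0.
by case: (posnP (ht (run q x))) => //= hp; rewrite ht_lt.
Qed.

Lemma Dd_card : #|Dd| <= 1.
Proof.
apply/card_le1_eqP => r1 r2; rewrite !inE => /andP[/andP[r1r /eqP c1] /eqP h1] /andP[/andP[r2r /eqP c2] /eqP h2].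
rewrite -c1 -c2; apply: canon_eq => // w.
by rewrite !ht0_dead.
Qed.

Lemma F_card q : q \in Lv -> #|F q| <= #|[set r in Lv | ht r < ht q]|.+1.
Proof.
rewrite inE => /andP[crq hq].
rewrite /F crq /= (negbTE hq).
apply: (@leq_trans #|[set r in Lv | ht r < ht q] :|: Dd|).
  apply: subset_leq_card; apply/subsetP => r; rewrite !inE.
  case/andP=> -> /= /orP[->|->]; first by rewrite orbT.
  by case: (ht r == 0).
rewrite cardsU -addn1; apply: leq_trans (leq_subr _ _) _.
by rewrite leq_add2l Dd_card.
Qed.

Lemma F_card1 q : q \notin Lv -> #|F q| <= 1.
Proof.
rewrite inE /F; case: (cr q) => /=; last by rewrite cards1.
by rewrite negbK => ->; apply: Dd_card.
Qed.

Lemma Lv_card : #|Lv| <= #|Q|.-1.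
Proof.
rewrite -(cardsC1 dstate); apply: subset_leq_card; apply/subsetP => r.
rewrite !inE => /andP[_ h]; apply/eqP => e; move: h; by rewrite e dstate_dead.
Qed.

Definition T := [set f | pb (exists x, x != [::] /\ fx x = f)].

Lemma T_card : #|T| <= (#|Q|.-1)`!.
Proof.
apply: leq_trans (_ : #|family F| <= _).
  apply: subset_leq_card; apply/subsetP => f; rewrite inE => /pbP[x [xn <-]].
  exact: fx_family.
apply: leq_trans (leq_fact Lv_card).
apply: leq_trans (prod_cnt ht (erefl #|Lv|)).
rewrite card_family_prod (bigID (mem Lv)) /=.
rewrite -[X in _ <= X]muln1 leq_mul //.
  by apply: leq_prod => q; apply: F_card.
apply: (@leq_trans (\prod_(q | q \notin Lv) 1)).
  by apply: leq_prod => q; apply: F_card1.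
by rewrite big1_eq.
Qed.

Definition wit (f : {ffun Q -> Q}) :=
  epsilon (inhabits [::]) (fun x => x != [::] /\ fx x = f).

Lemma wit_spec f : f \in T -> wit f != [::] /\ fx (wit f) = f.
Proof. by rewrite inE => /pbP h; exact: (epsilon_spec (inhabits [::]) _ h). Qed.

Lemma syn_T : syntactic_complexity L #|T|.
Proof.
exists [seq wit f | f <- enum T]; split.
- by rewrite size_map cardE.
- by move=> x /mapP[f]; rewrite mem_enum => /wit_spec[h _] ->.
- move=> i j; rewrite cardE => hi hj.
  rewrite !(nth_map (fx [::])) // => /syn_fx.
  have hT k : k < size (enum T) -> nth (fx [::]) (enum T) k \in T.
    by move=> hk; rewrite -mem_enum mem_nth.
  rewrite (proj2 (wit_spec (hT _ hi))) (proj2 (wit_spec (hT _ hj))) => e.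
  by apply/eqP; rewrite -(nth_uniq (fx [::]) hi hj (enum_uniq _)) e.
- move=> w wn; have fT : fx w \in T by rewrite inE; apply/pbP; exists w.
  exists (wit (fx w)); first by apply/mapP; exists (fx w); rewrite ?mem_enum.
  by apply: fx_syn; rewrite (proj2 (wit_spec fT)).
Qed.

Lemma upper_main : exists k, syntactic_complexity L k /\ k <= (#|Q|.-1)`!.
Proof. exists #|T|; split; [exact: syn_T | exact: T_card]. Qed.
End Upper.

Lemma card_gt_ord k (q : 'I_k) : #|[set r : 'I_k | q < r]| = k - q.+1.
Proof.
rewrite -sum1dep_card -(big_mkord (fun r => q < r) (fun _ => 1)) /= sum1_count.
move: (ltn_ord q); move: (nat_of_ord q) => j hj.
rewrite /index_iota subn0 -(subnKC hj) iotaD count_cat add0n.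
rewrite (eq_in_count (a2 := pred0)); last first.
  by move=> r; rewrite mem_iota => /andP[_ h] /=; rewrite ltnNge -ltnS -(add0n r.+1) h.
rewrite count_pred0 add0n (eq_in_count (a2 := predT)); last first.
  by move=> r; rewrite mem_iota => /andP[h _].
by rewrite count_predT size_iota addKn.
Qed.

Lemma prod_rev m : \prod_(i < m) (m - i) = m`!.
Proof.
elim: m => [|m IH]; first by rewrite big_ord0.
by rewrite big_ord_recl subn0 factS -IH.
Qed.

Section Lower.
Variable m : nat.
Local Notation S := 'I_m.+1.
Local Notation Sg := {ffun S -> S}.
Definition act (t : Sg) (q : S) : S := if q < t q then t q else ord_max.
Definition B : DFA Sg :=
  {| dfa_state := S; dfa_init := ord0; dfa_trans := fun q t => act t q;
     dfa_final := fun q : S => q.+1 == m |}.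
Local Notation rn := (@run _ B).
Local Notation ln := (@lng _ B).

Lemma act_max t : act t ord_max = ord_max.
Proof. by rewrite /act ltnNge -ltnS ltn_ord. Qed.

Lemma act_gt t (q : S) : q != ord_max -> q < act t q.
Proof.
move=> hq; rewrite /act; case: ifP => // _.
by rewrite ltn_neqAle leq_ord andbT; apply: contra hq => /eqP h; apply/eqP/val_inj.
Qed.

Lemma rn_max w : rn ord_max w = ord_max.
Proof. by elim: w => //= t w IH; rewrite /run /= act_max. Qed.

Lemma rn_cons (q : S) t w : rn q (t :: w) = rn (act t q) w.
Proof. by []. Qed.

Lemma rn_ge (q : S) w : q <= rn q w.
Proof.
elim: w q => //= t w IH q; rewrite -/(rn _ _).
case: (q =P ord_max) => [->|/eqP hq]; first by rewrite act_max rn_max.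
exact: leq_trans (ltnW (act_gt t hq)) (IH _).
Qed.

Lemma rn_size (q : S) w : rn q w != ord_max -> q + size w <= rn q w.
Proof.
elim: w q => [|t w IH] q /=; first by rewrite addn0.
rewrite -/(rn _ _) => h.
have hq : q != ord_max by apply: contra h => /eqP ->; rewrite act_max rn_max.
rewrite addnS; apply: leq_trans (IH _ h); rewrite ltn_add2r; exact: act_gt.
Qed.

Lemma acc_size w : dfa_accepts B w -> size w <= m.
Proof.
rewrite /dfa_accepts /= -/(rn _ _) => /eqP h.
have hm : rn ord0 w != ord_max by apply/eqP => e; move: h; rewrite e /= => /eqP; rewrite eqn_leq ltnn.
have := rn_size hm; rewrite add0n => hs; apply: leq_trans hs _.
by rewrite -ltnS h.
Qed.

Fixpoint allw (k : nat) : seq (seq Sg) :=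
  if k is k'.+1 then [::] :: [seq x :: w | x <- enum Sg, w <- allw k'] else [:: [::]].

Lemma allw_spec k w : size w <= k -> w \in allw k.
Proof.
elim: k w => [|k IH] [|x w] //=; rewrite ltnS => hw.
rewrite in_cons /=; apply/allpairsP; exists (x, w) => /=; split => //.
  by rewrite mem_enum.
exact: IH.
Qed.

Lemma B_finite : finite_lang (dfa_accepts B).
Proof. exists (allw m) => w /acc_size; exact: allw_spec. Qed.

Definition ui (i : S) : seq Sg := if i == ord0 then [::] else [:: [ffun _ => i]].

Lemma rn_ui i : rn ord0 (ui i) = i.
Proof.
rewrite /ui; case: eqP => [->|/eqP hi] //=.
rewrite /run /= /act ffunE lt0n; case: ifP => // /negbFE/eqP h.
by case/eqP: hi; apply: val_inj.
Qed.

Lemma dist_lt (i j : S) : i < j -> exists v, ln i v != ln j v.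
Proof.
move=> hij.
case: (boolP (i.+1 == m)) => hi.
  exists [::]; rewrite /lng /= hi; suff -> : (j.+1 == m) = false by [].
  apply/negbTE/negP => /eqP e.
  have : (i : nat) == j by rewrite -eqSS (eqP hi) e.
  by move/eqP => h; rewrite h ltnn in hij.
have him : i.+1 < m.
  rewrite ltn_neqAle hi /=; apply: leq_trans hij _; rewrite -ltnS; exact: ltn_ord.
pose tg : S := inord m.-1.
pose sl : Sg := [ffun q => if q == i then tg else ord_max].
have tgv : tg = m.-1 :> nat by rewrite inordK // ltnS leq_pred.
exists [:: sl]; rewrite /lng /run /= /act !ffunE eqxx.
have -> : (j == i) = false by apply/negbTE; rewrite neq_ltn hij orbT.
rewrite tgv; have -> : i < m.-1 by rewrite -ltnS prednK // (leq_ltn_trans _ him).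
rewrite tgv prednK ?eqxx; last by apply: leq_ltn_trans _ him.
by case: ifP => _; rewrite /= eqn_leq ltnn.
Qed.

Lemma dist (i j : S) : i != j -> exists v, ln i v != ln j v.
Proof.
rewrite neq_ltn => /orP[h|h]; first exact: dist_lt.
by case: (dist_lt h) => v hv; exists v; rewrite eq_sym.
Qed.

Lemma B_min (A : DFA Sg) : dfa_accepts A =1 dfa_accepts B -> m.+1 <= #|dfa_state A|.
Proof.
move=> e; pose g (i : S) := run (dfa_init A) (ui i).
have inj : injective g.
  move=> i j hg; apply/eqP; apply: contraT => /dist [v] /negP hv; exfalso; apply: hv; apply/eqP.
  have h : forall k, ln k v = dfa_accepts A (ui k ++ v).
    by move=> k; rewrite e (_ : dfa_accepts B _ = ln ord0 (ui k ++ v)) // /lng run_cat rn_ui.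
  rewrite !h /dfa_accepts.
  rewrite (_ : foldl _ _ (ui i ++ v) = run (run (dfa_init A) (ui i)) v); last by rewrite -run_cat.
  rewrite (_ : foldl _ _ (ui j ++ v) = run (run (dfa_init A) (ui j)) v); last by rewrite -run_cat.
  by rewrite -/(g i) -/(g j) hg.
by have := leq_card g inj; rewrite card_ord.
Qed.

Definition good (t : Sg) := [forall q, if q == ord_max then t q == ord_max else q < t q].
Definition G := [set t | good t].
Definition Fm (q : S) : {set S} := if q == ord_max then [set ord_max] else [set r : S | q < r].

Lemma G_card : #|G| = m`!.
Proof.
have -> : #|G| = #|family Fm|.
  apply: eq_card => t; rewrite inE; apply/forallP/familyP => h q; move: (h q);
  by rewrite /Fm; case: ifP; rewrite inE.
rewrite card_family_prod big_ord_recr /= /Fm eqxx cards1 muln1 -prod_rev.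
apply: eq_bigr => i _.
have -> : (widen_ord (leqnSn m) i == ord_max) = false.
  by apply/negbTE; rewrite -val_eqE /= neq_ltn ltn_ord.
by rewrite card_gt_ord /= subSS.
Qed.

Lemma act_good t q : good t -> act t q = t q.
Proof.
move/forallP/(_ q); rewrite /act; case: eqP => [-> /eqP ->|_ ->] //.
by rewrite ltnn.
Qed.

Definition tw (w : seq Sg) : Sg := [ffun q => rn q w].

Lemma tw_good w : w != [::] -> good (tw w).
Proof.
case: w => // t w _; apply/forallP => q; rewrite ffunE.
case: eqP => [->|/eqP hq]; first by rewrite rn_max.
exact: leq_trans (act_gt t hq) (rn_ge _ _).
Qed.

Lemma accB3 q x v : dfa_accepts B (ui q ++ x ++ v) = ln (rn q x) v.
Proof.
rewrite (_ : dfa_accepts B _ = ln ord0 (ui q ++ x ++ v)) //.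
by rewrite /lng !run_cat rn_ui.
Qed.

Lemma accB u v x : dfa_accepts B (u ++ x ++ v) = ln (rn (rn ord0 u) x) v.
Proof.
rewrite (_ : dfa_accepts B _ = ln ord0 (u ++ x ++ v)) //.
by rewrite /lng !run_cat.
Qed.

Lemma B_syn : syntactic_complexity (dfa_accepts B) m`!.
Proof.
exists [seq [:: t] | t <- enum G]; split.
- by rewrite size_map -cardE G_card.
- by move=> x /mapP[t _ ->].
- move=> i j; rewrite -G_card cardE => hi hj.
  rewrite !(nth_map [ffun _ => ord0] [::]) //= => hs.
  have hT k : k < size (enum G) -> good (nth [ffun _ => ord0] (enum G) k).
    by move=> hk; have := mem_nth [ffun _ => ord0] hk; rewrite mem_enum inE.
  apply/eqP; rewrite -(nth_uniq [ffun _ => ord0] hi hj (enum_uniq _)).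
  apply/eqP/ffunP => q; apply/eqP; apply: contraT => /dist[v] /negP hv.
  exfalso; apply: hv; apply/eqP.
  move: (hs (ui q) v); rewrite !accB3 /run /= !act_good ?hT //.
- move=> w wn; exists [:: tw w].
    by apply/mapP; exists (tw w) => //; rewrite mem_enum inE tw_good.
  move=> u v; rewrite !accB; congr (ln _ v).
  by rewrite /run /= act_good ?tw_good // ffunE.
Qed.

Lemma B_sc : state_complexity (dfa_accepts B) m.+1.
Proof.
split; first by exists B; split => //; rewrite card_ord.
move=> A e; exact: B_min.
Qed.

End Lower.

Lemma syn_compl (Sigma : finType) (L : lang Sigma) k :
  syntactic_complexity (fun w => ~~ L w) k -> syntactic_complexity L k.
Proof.
have E : forall x y, syn_equiv (fun w => ~~ L w) x y <-> syn_equiv L x y.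
  move=> x y; split => h u v; first by move: (h u v) => /= /negb_inj.
  by rewrite /= h.
case=> reps [h1 h2 h3 h4]; exists reps; split => //.
- by move=> i j hi hj /E; apply: h3.
- by move=> w /h4 [x hx /E hx']; exists x.
Qed.

Theorem theorem1 :
  (forall (Sigma : finType) (L : lang Sigma) (n : nat),
      0 < #|Sigma| -> 1 <= n ->
      (finite_lang L \/ cofinite_lang L) ->
      state_complexity L n ->
      exists k, syntactic_complexity L k /\ k <= (n.-1)`!) /\
  (forall n : nat, 1 <= n ->
      exists Sigma : finType, 0 < #|Sigma| /\
        exists L : lang Sigma,
          [/\ finite_lang L, state_complexity L n & syntactic_complexity L (n.-1)`!]).
Proof.
split.
  move=> Sigma L n hS _ hfin [[A [eA cA]] _].
  case/card_gt0P: hS => a _.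
  case: hfin => [[s hs]|[s hs]].
    by have := upper_main eA hs a; rewrite cA.
  pose A' := {| dfa_state := dfa_state A; dfa_init := dfa_init A;
                dfa_trans := @dfa_trans _ A; dfa_final := predC (@dfa_final _ A) |}.
  have eA' : dfa_accepts A' =1 (fun w => ~~ L w).
    by move=> w; rewrite /dfa_accepts /= -eA.
  have [k [hk1 hk2]] := upper_main eA' hs a.
  by exists k; split; [apply: syn_compl | rewrite -cA].
case=> // m _; exists {ffun 'I_m.+1 -> 'I_m.+1}; split.
  by apply/card_gt0P; exists [ffun q => q].
exists (dfa_accepts (B m)); split; [exact: B_finite | exact: B_sc | exact: B_syn].
Qed.
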